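(* Let $G$ and $H$ be rooted graphs. For any integers $g,h,k\ge 0$ and $m\ge 2$, \[ X_{S^{ghk}(G,H,C_m)}=(m-1)\,X_{S^{gh}_{k+m-1}(G,H)}-\sum_{l=1}^{m-2}X_{S^{gh}_{k+l-1}(G,H)}\,X_{C_{m-l}}. \]
   Context: All graphs are finite simple graphs. The chromatic symmetric function of a graph $G$ is $X_G=\sum_{\kappa}\prod_{v\in V(G)}x_{\kappa(v)}$, where $\kappa$ ranges over proper colorings $\kappa:V(G)\to\{1,2,\dots\}$. $C_m$ is the cycle on $m$ vertices for $m\ge3$, $C_2:=K_2$, rooted at any vertex. For nonnegative integers $\tau_1,\tau_2,\tau_3$ and rooted graphs $(G_i,u_i)$, $S^{\tau_1\tau_2\tau_3}(G_1,G_2,G_3)$ is obtained by taking a center vertex $c$ and three paths from $c$, disjoint except at $c$, of lengths $\tau_1,\tau_2,\tau_3$, and identifying $u_i$ with the far end of the $i$-th path (with $c$ itself if $\tau_i=0$), the $G_i$ being disjoint. $S^{gh}_{j}(G,H)$ denotes $S^{ghj}(G,H,K_1)$, i.e., the third leg is a plain path of length $j$ ending in a leaf. *)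

(* Defs.v *)
From HB Require Import structures.
From mathcomp Require Import all_boot all_order all_algebra.
From mathcomp Require Import mpoly.
Record rooted_graph := RGraph { vert : finType; adj : rel vert; root : vert }.
Set Implicit Arguments. Unset Strict Implicit. Unset Printing Implicit Defensive.
Import GRing.Theory.
Local Open Scope ring_scope.


Definition simple_graph (G : rooted_graph) : Prop :=
  irreflexive (adj G) /\ ssrbool.symmetric (adj G).

Definition proper (G : rooted_graph) (n : nat) (k : {ffun vert G -> 'I_n}) : bool :=
  [forall u, forall v, adj G u v ==> (k u != k v)].

(* The chromatic symmetric function X_G, truncated to the n variables
   x_0, ..., x_{n-1} (i.e. all other variables set to 0). *)
Definition chromsym (n : nat) (G : rooted_graph) : {mpoly int[n]} :=
  \sum_(k : {ffun vert G -> 'I_n} | proper k) \prod_(v : vert G) 'X_(k v).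

Definition K1 : rooted_graph := @RGraph unit (fun _ _ => false) tt.

(* C_m (for m >= 2; C_2 = K_2), vertices 0..m-1, rooted at 0 *)
Definition cycle_graph (m : nat) : rooted_graph :=
  @RGraph 'I_m.-1.+1
    (fun i j => (i != j) && ((val j == ((val i).+1 %% m.-1.+1)%N)
                          || (val i == ((val j).+1 %% m.-1.+1)%N)))
    ord0.

(* One leg: path vertices p_1..p_t (indexed by 'I_t, index j standing for
   p_{j+1}), together with the non-root vertices of G.  The root of G is
   identified with p_t (or with the centre if t = 0). In option (leg_t G t),
   None stands for the centre c. *)
Definition leg_t (G : rooted_graph) (t : nat) : finType :=
  ('I_t + {v : vert G | v != root G})%type.

(* position p_j on the path (p_0 = centre) *)
Definition leg_pos (G : rooted_graph) (t : nat) (j : nat) : option (leg_t G t) :=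
  if j is j'.+1 then
    (if (insub j' : option 'I_t) is Some o then Some (inl o) else None)
  else None.

Definition leg_emb (G : rooted_graph) (t : nat) (v : vert G) : option (leg_t G t) :=
  if (insub v : option {x : vert G | x != root G}) is Some w then Some (inr w)
  else leg_pos G t t.

Definition leg_adj (G : rooted_graph) (t : nat) (x y : option (leg_t G t)) : bool :=
  [exists a : vert G, exists b : vert G,
     [&& adj G a b, leg_emb t a == x & leg_emb t b == y]]
  || [exists j : 'I_t,
        ((leg_pos G t j == x) && (leg_pos G t (j.+1)%N == y))
        || ((leg_pos G t (j.+1)%N == x) && (leg_pos G t j == y))].

Definition spider_t (t1 t2 t3 : nat) (G1 G2 G3 : rooted_graph) : finType :=
  option (leg_t G1 t1 + leg_t G2 t2 + leg_t G3 t3)%type.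

Definition lift1 t1 t2 t3 G1 G2 G3 (x : option (leg_t G1 t1)) :
  spider_t t1 t2 t3 G1 G2 G3 := omap (fun a => inl (inl a)) x.
Definition lift2 t1 t2 t3 G1 G2 G3 (x : option (leg_t G2 t2)) :
  spider_t t1 t2 t3 G1 G2 G3 := omap (fun a => inl (inr a)) x.
Definition lift3 t1 t2 t3 G1 G2 G3 (x : option (leg_t G3 t3)) :
  spider_t t1 t2 t3 G1 G2 G3 := omap (fun a => inr a) x.

Definition spider_adj t1 t2 t3 G1 G2 G3 (x y : spider_t t1 t2 t3 G1 G2 G3) :
  bool :=
  [exists p, exists q, [&& leg_adj p q, lift1 t2 t3 G2 G3 p == x
                                      & lift1 t2 t3 G2 G3 q == y]]
  || [exists p, exists q, [&& leg_adj p q, lift2 t1 t3 G1 G3 p == x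
                                         & lift2 t1 t3 G1 G3 q == y]]
  || [exists p, exists q, [&& leg_adj p q, lift3 t1 t2 G1 G2 p == x
                                         & lift3 t1 t2 G1 G2 q == y]].

Definition spider (t1 t2 t3 : nat) (G1 G2 G3 : rooted_graph) : rooted_graph :=
  @RGraph (spider_t t1 t2 t3 G1 G2 G3) (@spider_adj t1 t2 t3 G1 G2 G3) None.

Definition spider2 (g h j : nat) (G H : rooted_graph) : rooted_graph := spider g h j G H K1.

(* Main.v *)
Require Import Defs.
From mathcomp Require Import all_boot all_order all_algebra.
From mathcomp Require Import mpoly.
From mathcomp Require Import ring zify.
Import GRing.Theory.
Local Open Scope ring_scope.
Set Implicit Arguments. Unset Strict Implicit. Unset Printing Implicit Defensive.

Section Sec0.
Variable n : nat.
Local Notation I := 'I_n.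
Local Notation R := {mpoly int[n]}.

Lemma sum_ffun_bij (A B : finType) (s : A -> B) (t : B -> A)
  (st : cancel s t) (ts : cancel t s)
  (P : pred {ffun A -> I}) (F : {ffun A -> I} -> R) :
  \sum_(h | P h) F h =
  \sum_(g : {ffun B -> I} | P [ffun a => g (s a)]) F [ffun a => g (s a)].
Proof.
rewrite (reindex (fun g : {ffun B -> I} => [ffun a => g (s a)])) //.
exists (fun h : {ffun A -> I} => [ffun b => h (t b)]) => g _.
  by apply/ffunP => b; rewrite !ffunE ts.
by apply/ffunP => a; rewrite !ffunE st.
Qed.

Definition fopt (A : finType) (c : I) (g : {ffun A -> I}) : {ffun option A -> I} :=
  [ffun x => if x is Some a then g a else c].

Lemma sum_ffun_opt (A : finType) (P : pred {ffun option A -> I})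
  (F : {ffun option A -> I} -> R) :
  \sum_(f | P f) F f = \sum_(c : I) \sum_(g : {ffun A -> I} | P (fopt c g)) F (fopt c g).
Proof.
rewrite pair_big_dep /=.
rewrite (reindex (fun p : I * {ffun A -> I} => fopt p.1 p.2)) //.
exists (fun f : {ffun option A -> I} => (f None, [ffun a => f (Some a)])).
  move=> [c g] _ /=; congr (_, _); rewrite /fopt ?ffunE //.
  by apply/ffunP => a; rewrite !ffunE.
by move=> f _; apply/ffunP => -[a|]; rewrite /fopt !ffunE.
Qed.

Definition fsumf (A B : finType) (g : {ffun A -> I}) (h : {ffun B -> I})
  : {ffun (A + B)%type -> I} :=
  [ffun x => match x with inl a => g a | inr b => h b end].

Lemma sum_ffun_sum (A B : finType) (P : pred {ffun (A + B)%type -> I})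
  (F : {ffun (A + B)%type -> I} -> R) :
  \sum_(f | P f) F f =
  \sum_(g : {ffun A -> I}) \sum_(h : {ffun B -> I} | P (fsumf g h)) F (fsumf g h).
Proof.
rewrite pair_big_dep /=.
rewrite (reindex (fun p : {ffun A -> I} * {ffun B -> I} => fsumf p.1 p.2)) //.
exists (fun f : {ffun (A + B)%type -> I} =>
          ([ffun a => f (inl a)], [ffun b => f (inr b)])).
  by move=> [g h] _ /=; congr (_, _); apply/ffunP => a; rewrite !ffunE.
by move=> f _; apply/ffunP => -[a|b]; rewrite !ffunE.
Qed.

Lemma big_opt (A : finType) (F : option A -> R) :
  \prod_(x : option A) F x = F None * \prod_(a : A) F (Some a).
Proof.
rewrite (reindex (fun s : (unit + A)%type => if s is inr a then Some a else None)).
  rewrite big_sumType /=.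
  by rewrite (big_pred1 tt) //; case.
exists (fun x : option A => if x is Some a then inr a else inl tt).
  by move=> [[]|a].
by move=> [a|].
Qed.

End Sec0.

Section Sec1.
Variable n : nat.
Local Notation I := 'I_n.
Local Notation R := {mpoly int[n]}.

Fixpoint W (t : nat) (c e : I) : R :=
  if t is t'.+1 then \sum_(a | a != c) 'X_a * W t' a e else (c == e)%:R.

Definition pcol (t : nat) (c : I) (g : {ffun 'I_t -> I}) (j : nat) : I :=
  if j is j'.+1 then (if (insub j' : option 'I_t) is Some o then g o else c) else c.

Arguments pcol : simpl never.

Definition pathok (t : nat) (c : I) (g : {ffun 'I_t -> I}) : bool :=
  [forall j : 'I_t, pcol c g j != pcol c g j.+1].

Lemma pcol0 t c (g : {ffun 'I_t -> I}) : pcol c g 0 = c. Proof. by []. Qed.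
Lemma pcolS t c (g : {ffun 'I_t -> I}) (o : 'I_t) : pcol c g (nat_of_ord o).+1 = g o.
Proof. by rewrite /pcol valK. Qed.

Lemma pcol_lift t c (f : {ffun 'I_t.+1 -> I}) (j : nat) : (j <= t)%N ->
  pcol c f j.+1 = pcol (f ord0) [ffun i => f (lift ord0 i)] j.
Proof.
case: j => [|j] hj.
  by rewrite (pcolS c f ord0).
have hj' : (j < t)%N by [].
rewrite (pcolS _ _ (Ordinal hj')) ffunE.
have -> : j.+2 = (lift ord0 (Ordinal hj')).+1 by rewrite lift0.
by rewrite pcolS.
Qed.

Lemma pathok_rec t c (f : {ffun 'I_t.+1 -> I}) :
  pathok c f = (c != f ord0) && pathok (f ord0) [ffun i => f (lift ord0 i)].
Proof.
apply/forallP/andP.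
  move=> H; split; first by have := H ord0; rewrite pcol0 (pcolS c f ord0).
  apply/forallP => i; have := H (lift ord0 i).
  rewrite lift0 pcol_lift ?pcol_lift //; last exact: ltnW.
move=> [H1 /forallP H2] j; case: (unliftP ord0 j) => [i ->|->].
  by rewrite lift0 pcol_lift ?pcol_lift //; last exact: ltnW.
by rewrite pcol0 (pcolS c f ord0).
Qed.

Lemma path_sum t c (F : I -> R) :
  \sum_(g : {ffun 'I_t -> I} | pathok c g) (\prod_i 'X_(g i)) * F (pcol c g t)
  = \sum_e W t c e * F e.
Proof.
elim: t c F => [|t IH] c F.
  rewrite (big_pred1 [ffun _ => c]); last first.
    move=> g; rewrite /= /pathok; apply/idP/eqP.
      by move=> _; apply/ffunP => -[].
    by move=> _; apply/forallP => -[].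
  rewrite big_ord0 mul1r pcol0 (bigD1 c) //= eqxx mul1r big1 ?addr0 //.
  by move=> e /negbTE; rewrite eq_sym => ->; rewrite mul0r.
rewrite (sum_ffun_bij (s := unlift ord0)
   (t := fun o : option 'I_t => if o is Some j then lift ord0 j else ord0)); last first.
- by case=> [j|]; rewrite ?liftK ?unlift_none.
- by move=> i; case: (unliftP ord0 i) => [j ->|->]; rewrite ?liftK ?unlift_none.
rewrite sum_ffun_opt.
have f0 c0 (g : {ffun 'I_t -> I}) :
  [ffun a : 'I_t.+1 => fopt c0 g (unlift ord0 a)] ord0 = c0.
  by rewrite ffunE unlift_none /fopt ffunE.
have fl c0 (g : {ffun 'I_t -> I}) :
   [ffun i => [ffun a : 'I_t.+1 => fopt c0 g (unlift ord0 a)] (lift ord0 i)] = g.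
  by apply/ffunP => i; rewrite !ffunE liftK.
transitivity (\sum_(c0 | c0 != c) 'X_c0 * \sum_e W t c0 e * F e); last first.
  under [RHS]eq_bigr => e _ do rewrite big_distrl /=.
  rewrite exchange_big /=; apply: eq_bigr => a _.
  by rewrite big_distrr; apply: eq_bigr => e _; apply: mulrA.
rewrite (bigID (fun c0 => c0 != c)) /= [X in _ + X]big1 ?addr0; last first.
  move=> c0 /negbNE /eqP ->; apply: big_pred0 => g.
  by rewrite pathok_rec f0 eqxx.
apply: eq_bigr => c0 hc0.
rewrite -IH big_distrr /=; apply: eq_big => g.
  by rewrite pathok_rec f0 fl eq_sym hc0.
move=> _; rewrite big_ord_recl f0 pcol_lift // f0 fl mulrA; congr (_ * _ * _).
by apply: eq_bigr => i _; rewrite ffunE liftK /fopt ffunE.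
Qed.

End Sec1.

Section Sec2.
Variable n : nat.
Local Notation I := 'I_n.
Local Notation R := {mpoly int[n]}.

Definition gcol (G : rooted_graph) (e : I)
  (h : {ffun {v : vert G | v != Defs.root G} -> I}) (a : vert G) : I :=
  if (insub a : option {v : vert G | v != Defs.root G}) is Some w then h w else e.

Definition gprop (G : rooted_graph) (e : I) (h : {ffun {v : vert G | v != Defs.root G} -> I}) :=
  [forall a, forall b, adj G a b ==> (gcol e h a != gcol e h b)].

Definition Rg (G : rooted_graph) (e : I) : R :=
  \sum_(h : {ffun {v : vert G | v != Defs.root G} -> I} | gprop e h) \prod_w 'X_(h w).

Lemma prod_root (G : rooted_graph) (F : vert G -> R) :
  \prod_(v : vert G) F v = F (Defs.root G) * \prod_(w : {v : vert G | v != Defs.root G}) F (val w).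
Proof.
rewrite (reindex (fun o : option {v : vert G | v != Defs.root G} =>
                    if o is Some w then val w else Defs.root G)).
  by rewrite big_opt.
exists (fun v => insub v).
  by case=> [w|] _ /=; [rewrite valK | rewrite insubF ?eqxx].
move=> v _; case: insubP => [w _ -> //|]; by rewrite negbK => /eqP ->.
Qed.

Lemma chromsym_root (G : rooted_graph) :
  chromsym n G = \sum_e 'X_e * Rg G e.
Proof.
rewrite /chromsym (sum_ffun_bij (s := fun v => insub v)
  (t := fun o : option {v : vert G | v != Defs.root G} =>
                    if o is Some w then val w else Defs.root G)); last 2 first.
- move=> v; case: insubP => [w _ -> //|]; by rewrite negbK => /eqP ->.
- by case=> [w|] /=; [rewrite valK | rewrite insubF ?eqxx].
rewrite sum_ffun_opt; apply: eq_bigr => e _.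
have gcolE (h : {ffun {v : vert G | v != Defs.root G} -> I}) a :
   [ffun a => fopt e h (insub a)] a = gcol e h a.
  by rewrite ffunE /fopt ffunE /gcol; case: insub.
rewrite /Rg big_distrr; apply: eq_big => h.
  by apply: eq_forallb => a; apply: eq_forallb => b; rewrite !gcolE.
move=> _; rewrite prod_root gcolE /gcol insubF ?eqxx //; congr (_ * _).
by apply: eq_bigr => w _; rewrite gcolE /gcol valK.
Qed.

Definition legprop (G : rooted_graph) (t : nat) (k : option (leg_t G t) -> I) :=
  [forall x, forall y, leg_adj x y ==> (k x != k y)].

Definition legsum (G : rooted_graph) (t : nat) (c : I) : R :=
  \sum_(f : {ffun leg_t G t -> I} | legprop (fun x => fopt c f x)) \prod_x 'X_(f x).

Lemma sum_andb (T : finType) (b : bool) (P : pred T) (F : T -> R) :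
  \sum_(x | b && P x) F x = if b then \sum_(x | P x) F x else 0.
Proof. by case: b => //; rewrite big_pred0. Qed.

Lemma legsum_eq G t c :
  legsum G t c = \sum_(g : {ffun 'I_t -> I} | pathok c g)
                   (\prod_i 'X_(g i)) * Rg G (pcol c g t).
Proof.
rewrite /legsum sum_ffun_sum [RHS]big_mkcond; apply: eq_bigr => g _.
pose k (h : {ffun {v : vert G | v != Defs.root G} -> I}) := fun x => fopt c (fsumf g h) x.
have kpos h j : k h (leg_pos G t j) = pcol c g j.
  rewrite /k /leg_pos /pcol; case: j => [|j]; first by rewrite ffunE.
  by case: insub => [o|]; rewrite ffunE // ffunE.
have kemb h a : k h (leg_emb t a) = gcol (pcol c g t) h a.
  rewrite /leg_emb /gcol; case: insub => [w|]; last exact: kpos.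
  by rewrite /k !ffunE.
have Hp (h : {ffun {v : vert G | v != Defs.root G} -> I}) : legprop (fun x => fopt c (fsumf g h) x) = pathok c g && gprop (pcol c g t) h.
  change (legprop (k h) = pathok c g && gprop (pcol c g t) h).
  apply/forallP/andP.
    move=> H; split.
      apply/forallP => j; have /forallP := H (leg_pos G t j).
      move=> /(_ (leg_pos G t j.+1)) /implyP; rewrite !kpos; apply.
      apply/orP; right; apply/existsP; exists j; by rewrite !eqxx.
    apply/forallP => a; apply/forallP => b; apply/implyP => hab.
    have /forallP := H (leg_emb t a); move=> /(_ (leg_emb t b)) /implyP.
    rewrite !kemb; apply; apply/orP; left.
    by apply/existsP; exists a; apply/existsP; exists b; rewrite hab !eqxx.
  move=> [/forallP Hpath /forallP Hg] x; apply/forallP => y; apply/implyP.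
  case/orP => [/existsP [a /existsP [b /and3P [hab /eqP <- /eqP <-]]]|].
    by rewrite !kemb; have /forallP := Hg a; move=> /(_ b) /implyP; apply.
  case/existsP => j /orP [/andP [/eqP <- /eqP <-]|/andP [/eqP <- /eqP <-]];
    rewrite !kpos; first exact: Hpath.
  by rewrite eq_sym; apply: Hpath.
rewrite (eq_bigl _ _ Hp).
rewrite sum_andb; case: (pathok c g) => //.
rewrite /Rg big_distrr; apply: eq_bigr => h _.
rewrite big_sumType; congr (_ * _); apply: eq_bigr => i _; by rewrite ffunE.
Qed.

End Sec2.

Section Sec3.
Variable n : nat.
Local Notation I := 'I_n.
Local Notation R := {mpoly int[n]}.

Lemma Rg_K1 (e : I) : Rg K1 e = 1.
Proof.
rewrite /Rg (big_pred1 [ffun _ => e]); last first.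
  move=> h /=; apply/idP/eqP => _.
    by apply/ffunP => -[[] p]; move: p.
  by apply/forallP => a; apply/forallP => b.
by apply: big1 => -[[] p]; move: p.
Qed.

Lemma sum_ffun_sumT (A B : finType) (F : {ffun (A + B)%type -> I} -> R) :
  \sum_(f : {ffun (A + B)%type -> I}) F f =
  \sum_(g : {ffun A -> I}) \sum_(h : {ffun B -> I}) F (fsumf g h).
Proof. exact: (sum_ffun_sum (fun _ => true) F). Qed.

Lemma spider_proper t1 t2 t3 (G1 G2 G3 : rooted_graph)
  (c : I) (g1 : {ffun leg_t G1 t1 -> I}) (g2 : {ffun leg_t G2 t2 -> I})
  (g3 : {ffun leg_t G3 t3 -> I}) :
  @Defs.proper (spider t1 t2 t3 G1 G2 G3) n (fopt c (fsumf (fsumf g1 g2) g3)) =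
  [&& legprop (fun x => fopt c g1 x), legprop (fun x => fopt c g2 x)
    & legprop (fun x => fopt c g3 x)].
Proof.
set k := fopt c (fsumf (fsumf g1 g2) g3).
have k1 p : k (lift1 t2 t3 G2 G3 p) = fopt c g1 p.
  by case: p => [a|]; rewrite /k /= !ffunE.
have k2 p : k (lift2 t1 t3 G1 G3 p) = fopt c g2 p.
  by case: p => [a|]; rewrite /k /= !ffunE.
have k3 p : k (lift3 t1 t2 G1 G2 p) = fopt c g3 p.
  by case: p => [a|]; rewrite /k /= !ffunE.
apply/forallP/and3P.
  move=> H; split; apply/forallP => p; apply/forallP => q; apply/implyP => hpq.
  - have /forallP := H (lift1 t2 t3 G2 G3 p).
    move=> /(_ (lift1 t2 t3 G2 G3 q)) /implyP; rewrite !k1; apply.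
    rewrite /= /spider_adj; apply/orP; left; apply/orP; left; apply/existsP; exists p.
    by apply/existsP; exists q; rewrite hpq !eqxx.
  - have /forallP := H (lift2 t1 t3 G1 G3 p).
    move=> /(_ (lift2 t1 t3 G1 G3 q)) /implyP; rewrite !k2; apply.
    rewrite /= /spider_adj; apply/orP; left; apply/orP; right; apply/existsP; exists p.
    by apply/existsP; exists q; rewrite hpq !eqxx.
  - have /forallP := H (lift3 t1 t2 G1 G2 p).
    move=> /(_ (lift3 t1 t2 G1 G2 q)) /implyP; rewrite !k3; apply.
    rewrite /= /spider_adj; apply/orP; right; apply/existsP; exists p.
    by apply/existsP; exists q; rewrite hpq !eqxx.
move=> [/forallP H1 /forallP H2 /forallP H3] u; apply/forallP => v; apply/implyP.
rewrite /= /spider_adj.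
case/orP => [/orP []|] /existsP [p /existsP [q /and3P [hpq /eqP <- /eqP <-]]].
- by rewrite !k1; have /forallP := H1 p; move=> /(_ q) /implyP; apply.
- by rewrite !k2; have /forallP := H2 p; move=> /(_ q) /implyP; apply.
- by rewrite !k3; have /forallP := H3 p; move=> /(_ q) /implyP; apply.
Qed.

Lemma spider_eq t1 t2 t3 G1 G2 G3 :
  chromsym n (spider t1 t2 t3 G1 G2 G3) =
  \sum_c 'X_c * (legsum G1 t1 c * legsum G2 t2 c * legsum G3 t3 c).
Proof.
rewrite /chromsym /=.
rewrite sum_ffun_opt; apply: eq_bigr => c _.
rewrite sum_ffun_sum sum_ffun_sumT.
pose L1 := fun g1 : {ffun leg_t G1 t1 -> I} => legprop (fun x => fopt c g1 x).
pose L2 := fun g2 : {ffun leg_t G2 t2 -> I} => legprop (fun x => fopt c g2 x).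
pose L3 := fun g3 : {ffun leg_t G3 t3 -> I} => legprop (fun x => fopt c g3 x).
transitivity (\sum_(g1 | L1 g1) \sum_(g2 | L2 g2) \sum_(h | L3 h)
   ('X_c : R) * ((\prod_x 'X_(g1 x)) * (\prod_x 'X_(g2 x)) * (\prod_x 'X_(h x)))).
  rewrite [RHS]big_mkcond; apply: eq_bigr => g1 _; case: ifP => h1.
    rewrite [RHS]big_mkcond; apply: eq_bigr => g2 _; case: ifP => h2.
      apply: eq_big => h; first by rewrite spider_proper -/(L1 g1) h1 -/(L2 g2) h2.
      move=> _; rewrite big_opt ffunE.
      rewrite (@big_sumType _ _ _ (leg_t G1 t1 + leg_t G2 t2)%type (leg_t G3 t3)).
      rewrite (@big_sumType _ _ _ (leg_t G1 t1) (leg_t G2 t2)).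
      congr (_ * (_ * _ * _)); by apply: eq_bigr => x _; rewrite !ffunE.
    by apply: big_pred0 => h; rewrite spider_proper -/(L1 g1) h1 -/(L2 g2) h2.
  by apply: big1 => g2 _; apply: big_pred0 => h; rewrite spider_proper -/(L1 g1) h1.
rewrite /legsum -/(L1) -/(L2) -/(L3).
rewrite [in RHS]big_distrlr /= [in RHS]big_distrl /= [in RHS]big_distrr /=.
apply: eq_bigr => g1 _.
rewrite big_distrl /= big_distrr /=; apply: eq_bigr => g2 _.
rewrite big_distrr /= big_distrr /=; apply: eq_bigr => h _.
by rewrite mulrA.
Qed.

End Sec3.

Section Sec4.
Variable n : nat.
Local Notation I := 'I_n.
Local Notation R := {mpoly int[n]}.

Lemma cyc_ok s (e : I) (g : {ffun 'I_s.+1 -> I}) :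
  [forall a : 'I_s.+2, forall b : 'I_s.+2,
     adj (cycle_graph s.+2) a b ==> (pcol e g a != pcol e g b)]
  = pathok e g && (pcol e g s.+1 != e).
Proof.
apply/forallP/andP.
- move=> H; split.
  + apply/forallP => j.
    have /forallP := H (widen_ord (leqnSn _) j).
    move=> /(_ (lift ord0 j)) /implyP; rewrite lift0 /=; apply.
    apply/andP; split.
      by apply/eqP => /(congr1 val) /=; rewrite /bump /=; lia.
    by apply/orP; left; rewrite /bump /= add1n (@modn_small j.+1 s.+2 (ltn_ord j)).
  + have /forallP := H ord_max; move=> /(_ ord0) /implyP /=; apply.
    by rewrite modnn eqxx.
- move=> [/forallP Hp He] a; apply/forallP => b; apply/implyP.
  have key (x y : 'I_s.+2) : nat_of_ord y = ((nat_of_ord x).+1 %% s.+2)%N -> pcol e g x != pcol e g y.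
    move=> hy; case: (ltnP (nat_of_ord x).+1 s.+2) => hx.
      rewrite modn_small // in hy; rewrite hy.
      have hx' : (nat_of_ord x < s.+1)%N by [].
      exact: (Hp (Ordinal hx')).
    have hx1 : nat_of_ord x = s.+1 by have := ltn_ord x; lia.
    have -> : nat_of_ord y = 0%N by rewrite hy hx1 modnn.
    by rewrite hx1 pcol0.
  move=> /andP [_ /orP [/eqP hb|/eqP ha]]; first exact: key.
  by rewrite eq_sym; apply: key.
Qed.

Lemma sig_val s (v : 'I_s.+2) : v != ord0 ->
  nat_of_ord v = (nat_of_ord (inord (nat_of_ord v).-1 : 'I_s.+1)).+1.
Proof.
move=> hv; have hv' : nat_of_ord v != 0%N.
  by move: hv; apply: contra => /eqP h; apply/eqP; apply: val_inj.
rewrite inordK; move: hv' (ltn_ord v); lia.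
Qed.

Lemma Rg_cyc s (e : I) :
  Rg (cycle_graph s.+2) e = \sum_f W s.+1 e f * (f != e)%:R.
Proof.
pose S := {v : vert (cycle_graph s.+2) | v != Defs.root (cycle_graph s.+2)}.
have pf (i : 'I_s.+1) : lift ord0 i != Defs.root (cycle_graph s.+2).
  by apply/eqP => /(congr1 val) /=; rewrite /bump.
pose tau := fun i : 'I_s.+1 => (exist _ (lift ord0 i) (pf i) : S).
pose sig := fun w : S => (inord (val (val w)).-1 : 'I_s.+1).
have st : cancel sig tau.
  move=> [v hv]; apply: val_inj; apply: val_inj => /=.
  rewrite /bump /= add1n inordK; last first.
    by change ((nat_of_ord v).-1 < s.+1)%N; have := ltn_ord v; lia.
  have hv' : nat_of_ord v != 0%N.
    by move: hv; apply: contra => /eqP h; apply/eqP; apply: val_inj.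
  by change ((nat_of_ord v).-1.+1 = v); move: hv'; lia.
have ts : cancel tau sig.
  by move=> i; rewrite /sig /= add0n inord_val.
rewrite /Rg (sum_ffun_bij st ts).
have gcolE (g : {ffun 'I_s.+1 -> I}) (a : 'I_s.+2) :
   gcol e [ffun w => g (sig w)] a = pcol e g a.
  rewrite /gcol; case: insubP => [w hw hwa|].
    rewrite ffunE -hwa.
    have -> : nat_of_ord (val w) = (nat_of_ord (sig w)).+1.
      have hw2 : val w != ord0 by rewrite hwa. exact: (sig_val hw2).
    by rewrite pcolS.
  by rewrite negbK => /eqP ->.
transitivity (\sum_(g : {ffun 'I_s.+1 -> I} | pathok e g)
                 (\prod_i ('X_(g i) : R)) * (pcol e g s.+1 != e)%:R); last first.
  by rewrite -(path_sum s.+1 e (fun f => (f != e)%:R)).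
rewrite big_mkcond [RHS]big_mkcond; apply: eq_bigr => g _.
have -> : gprop e [ffun w => g (sig w)] = pathok e g && (pcol e g s.+1 != e).
  rewrite -cyc_ok /gprop; apply: eq_forallb => a; apply: eq_forallb => b.
  by rewrite !gcolE.
have -> : \prod_w ('X_([ffun w => g (sig w)] w) : R) = \prod_i 'X_(g i).
  rewrite (reindex tau) /=; last by exists sig => ? _.
  by apply: eq_bigr => i _; rewrite ffunE ts.
case: (pathok e g) => //=; case: (pcol e g s.+1 != e); by rewrite ?mulr1 ?mulr0.
Qed.

End Sec4.

Section Sec5.
Variable n : nat.
Local Notation I := 'I_n.
Local Notation R := {mpoly int[n]}.

Definition Pw (t : nat) (c : I) : R := \sum_f W t c f.
Definition Ew (t : nat) (d : I) : R := W t d d.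
Definition Yw (j : nat) : R := if j is j'.+1 then \sum_e 'X_e * Pw j' e else 1.
Definition Wc (k : nat) : R := \sum_d 'X_d * (Pw k.-1 d - Ew k.-1 d).

Lemma sum_delta (P : pred I) (F : I -> R) (e : I) :
  \sum_(a | P a) F a * (a == e)%:R = (P e)%:R * F e.
Proof.
rewrite big_mkcond (bigD1 e) //= big1 ?addr0; last first.
  by move=> a /negbTE ->; case: (P a); rewrite ?mulr0.
by rewrite eqxx mulr1; case: (P e); rewrite ?mul1r ?mul0r.
Qed.

Lemma W_S t (c e : I) : W t.+1 c e = \sum_(a | a != c) 'X_a * W t a e.
Proof. by []. Qed.

Lemma W_last t (c e : I) : W t.+1 c e = (\sum_(a | a != e) W t c a) * 'X_e.
Proof.
elim: t c => [|t IH] c.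
  rewrite /= sum_delta.
  under eq_bigr => a _ do rewrite eq_sym -[_%:R]mulr1 mulrC.
  by rewrite sum_delta mulr1 (eq_sym e c).
rewrite W_S.
under eq_bigr => a _ do rewrite IH mulrA.
rewrite -big_distrl /=; congr (_ * _).
rewrite exchange_big /=; apply: eq_bigr => b _.
by rewrite big_distrr.
Qed.

Lemma sum_deltaT (F : I -> R) (e : I) : \sum_a F a * (a == e)%:R = F e.
Proof. by have := sum_delta xpredT F e; rewrite /= mul1r. Qed.

Lemma P0 (c : I) : Pw 0 c = 1.
Proof.
rewrite /Pw /=; under eq_bigr => f _ do rewrite eq_sym -[_%:R]mul1r.
exact: sum_deltaT.
Qed.

Lemma P_rec t (c : I) : Pw t.+1 c = Yw t.+1 - 'X_c * Pw t c.
Proof.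
have -> : Pw t.+1 c = \sum_(a | a != c) 'X_a * Pw t a.
  rewrite /Pw; under eq_bigr => f _ do rewrite W_S.
  rewrite exchange_big /=; apply: eq_bigr => a _; by rewrite big_distrr.
by rewrite /Yw [in RHS](bigD1 c) //= addrC addrK.
Qed.

Lemma E_rec t (d : I) : Ew t.+1 d = 'X_d * (Pw t d - Ew t d).
Proof.
by rewrite /Ew W_last /Pw [in RHS](bigD1 d) //= addrC addrK mulrC.
Qed.

Lemma W_add k j (c f : I) : W (k + j) c f = \sum_e W k c e * W j e f.
Proof.
elim: k c => [|k IH] c.
  rewrite add0n /=; under eq_bigr => e _ do rewrite eq_sym mulrC.
  by rewrite sum_deltaT.
rewrite addSn W_S; under eq_bigr => a _ do rewrite IH big_distrr.
rewrite exchange_big; apply: eq_bigr => e _.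
rewrite W_S big_distrl /=; apply: eq_bigr => a _; by rewrite mulrA.
Qed.

Definition RHSs s (e : I) : R :=
  \sum_(j < s) Pw j e * Wc (s.+1 - j) - s%:R * Pw s.+1 e.
Definition Ks s : R :=
  \sum_(j < s.+1) Yw j * Wc (s.+2 - j) - s.+1%:R * Yw s.+2.

Lemma E0 (d : I) : Ew 0 d = 1.
Proof. by rewrite /Ew /= eqxx. Qed.

Lemma E1 (d : I) : Ew 1 d = 0.
Proof. by rewrite E_rec P0 E0 subrr mulr0. Qed.

Lemma sumX_E t : \sum_e 'X_e * Ew t.+1 e = Yw t.+2 - Wc t.+2.
Proof.
rewrite /Wc /Yw /=; under [X in _ = _ - X]eq_bigr => d _ do rewrite mulrBr.
by rewrite sumrB opprB addrC subrK.
Qed.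

Lemma main_alg s : (forall e, Ew s.+1 e = RHSs s e) /\ Ks s = 0.
Proof.
elim: s => [|s [IH1 IH2]].
  split.
    by move=> e; rewrite /RHSs big_ord0 mul0r subr0 E1.
  rewrite /Ks big_ord_recl big_ord0 addr0 /= mul1r.
  have -> : Wc 2 = Yw 2.
    by rewrite /Wc /Yw; apply: eq_bigr => d _; rewrite E1 subr0.
  by rewrite mul1r subrr.
pose A := \sum_(j < s) Yw j.+1 * Wc (s.+1 - j).
have hW : Wc s.+2 = s.+1%:R * Yw s.+2 - A.
  rewrite -[LHS]subr0 -IH2 /Ks big_ord_recl.
  under eq_bigr => j _ do rewrite lift0 subSS.
  rewrite -/A; ring.
have E2 : forall e, Ew s.+2 e = RHSs s.+1 e.
  move=> e; rewrite /RHSs big_ord_recl P0 mul1r.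
  under eq_bigr => j _ do rewrite lift0 subSS P_rec mulrBl -mulrA.
  rewrite sumrB -big_distrr /= -/A.
  rewrite E_rec IH1 /RHSs (P_rec s.+1) hW.
  rewrite -(addn1 s) !natrD; ring.
split => //.
pose C := \sum_(j < s.+1) Yw j.+1 * Wc (s.+2 - j).
have H : Yw s.+3 - Wc s.+3 = C - s.+1%:R * Yw s.+3.
  rewrite -sumX_E; under eq_bigr => e _ do rewrite E2 /RHSs mulrBr.
  rewrite sumrB; congr (_ - _).
    under eq_bigr => e _ do rewrite big_distrr.
    rewrite exchange_big /=; apply: eq_bigr => j _.
    rewrite /Yw big_distrl /=; apply: eq_bigr => e _; ring.
  rewrite /Yw big_distrr /=; apply: eq_bigr => e _; ring.
rewrite /Ks big_ord_recl.
under eq_bigr => j _ do rewrite lift0 subSS.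
rewrite -/C subn0 mul1r.
have -> : C = Yw s.+3 - Wc s.+3 + s.+1%:R * Yw s.+3 by rewrite H; ring.
rewrite -(addn1 s.+1) !natrD; ring.
Qed.

End Sec5.

Section Sec6.
Variable n : nat.
Local Notation I := 'I_n.
Local Notation R := {mpoly int[n]}.

Lemma legsum_K1 j (c : I) : legsum K1 j c = Pw j c.
Proof.
rewrite legsum_eq; under eq_bigr => g _ do rewrite Rg_K1.
have := path_sum j c (fun _ => (1 : R)).
under [in RHS]eq_bigr => e _ do rewrite mulr1.
by move=> ->.
Qed.

Lemma legsum_cyc s k (c : I) :
  legsum (cycle_graph s.+2) k c = \sum_e W k c e * Rg (cycle_graph s.+2) e.
Proof. by rewrite legsum_eq path_sum. Qed.

Lemma Rg_cyc' s (e : I) : Rg (cycle_graph s.+2) e = Pw s.+1 e - Ew s.+1 e.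
Proof.
rewrite Rg_cyc /Pw /Ew [in RHS](bigD1 e) // [in LHS](bigD1 e) // eqxx mulr0 /=.
rewrite add0r addrC addrK; by apply: eq_bigr => f hf; rewrite hf mulr1.
Qed.

Lemma chromsym_cyc s : chromsym n (cycle_graph s.+2) = Wc n s.+2.
Proof.
rewrite chromsym_root /Wc; apply: eq_bigr => d _; by rewrite Rg_cyc'.
Qed.

Lemma Rg_point s (e : I) : Rg (cycle_graph s.+2) e =
  s.+1%:R * Pw s.+1 e - \sum_(j < s) Pw j e * Wc n (s.+1 - j).
Proof.
rewrite Rg_cyc' (proj1 (main_alg n s)) /RHSs.
rewrite -(addn1 s) natrD; ring.
Qed.

Lemma Pw_add k j (c : I) : Pw (k + j) c = \sum_e W k c e * Pw j e.
Proof.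
rewrite /Pw; under eq_bigr => f _ do rewrite W_add.
rewrite exchange_big /=; apply: eq_bigr => e _; by rewrite big_distrr.
Qed.

Lemma legsum_cyc_point s k (c : I) :
  legsum (cycle_graph s.+2) k c =
  s.+1%:R * Pw (k + s.+1) c - \sum_(j < s) Pw (k + j) c * Wc n (s.+1 - j).
Proof.
rewrite legsum_cyc; under eq_bigr => e _ do rewrite Rg_point mulrBr.
rewrite sumrB Pw_add big_distrr /=; congr (_ - _).
  by apply: eq_bigr => e _; rewrite mulrCA.
under [RHS]eq_bigr => j _ do rewrite Pw_add big_distrl.
rewrite exchange_big /=; apply: eq_bigr => e _.
rewrite big_distrr /=; apply: eq_bigr => j _; by rewrite mulrA.
Qed.

End Sec6.

Unset Implicit Arguments.

Theorem theorem4p8 (G H : rooted_graph) (g h k m : nat) :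
  simple_graph G -> simple_graph H -> (2 <= m)%N ->
  forall n : nat,
    chromsym n (spider g h k G H (cycle_graph m))
    = (m.-1)%:R * chromsym n (spider2 g h (k + m - 1) G H)
      - \sum_(1 <= l < m.-1)
          chromsym n (spider2 g h (k + l - 1) G H) * chromsym n (cycle_graph (m - l)).
Proof.
move=> _ _; case: m => [|[|s]] // _ n.
rewrite /spider2 !spider_eq /= big_add1 /= big_mkord.
have -> : (k + s.+2 - 1 = k + s.+1)%N by lia.
under [X in _ = _ - X]eq_bigr => j _.
  have -> : (k + j.+1 - 1 = k + j)%N by lia.
  have -> : (s.+2 - j.+1 = (s.-1 - j).+2)%N by have := ltn_ord j; lia.
  rewrite spider_eq chromsym_cyc.
  have -> : ((s.-1 - j).+2 = s.+1 - j)%N by have := ltn_ord j; lia.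
over.
under [X in _ = _ - X]eq_bigr => j _ do rewrite big_distrl /=.
rewrite exchange_big /= big_distrr /= -sumrB; apply: eq_bigr => c _.
rewrite !legsum_K1 legsum_cyc_point.
under [X in _ = _ - X]eq_bigr => j _ do rewrite legsum_K1.
move: (legsum G g c) (legsum H h c) => L1 L2.
rewrite [in RHS](_ : \sum_(j < s) _ =
   'X_c * (L1 * L2 * \sum_(j < s) Pw (k + j) c * Wc n (s.+1 - j))).
  ring.
rewrite mulrA mulrA big_distrr /=; apply: eq_bigr => j _; ring.
Qed.
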